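(* Let $\mathcal P$ be a Fitting program over a bilattice $\mathcal B$ and $\alpha\in\{\mathcal F,\mathcal T,\mathcal U,\mathcal I\}$. Then $\Psi'^{\alpha}_{\mathcal P}$ has two extreme oscillation points under the truth ordering, denoted $Fix^{\alpha}_{\mathcal F}$ and $Fix^{\alpha}_{\mathcal T}$, and $Fix^{\alpha}_{\mathcal F}\le_t Fix^{\alpha}_{\mathcal T}$.
   Context: A bilattice $\langle\mathcal B,\le_t,\le_k\rangle$ is a nonempty set with two partial orders, each making $\mathcal B$ a lattice with top and bottom. Under $\le_t$, meet and join are $\wedge,\vee$ (infinitary $\bigwedge,\bigvee$), bottom $\mathcal F$, top $\mathcal T$; under $\le_k$, meet and join are $\otimes,\oplus$ (infinitary $\bigotimes,\bigoplus$), bottom $\mathcal U$, top $\mathcal I$. Standing assumptions: $\mathcal B$ is complete for both orders, infinitely distributive, satisfies the infinitary interlacing conditions, and has a negation $\neg$ (an involution reversing $\le_t$ and preserving $\le_k$). A formula is built from literals ($A$ or $\neg A$) and elements of $\mathcal B$ using $\wedge,\vee,\otimes,\oplus,\exists,\forall$ (with built-in predicate $equal$). A clause is $P(x_1,\dots,x_n)\leftarrow\phi(x_1,\dots,x_n)$ with the body's free variables among $x_1,\dots,x_n$. A Fitting program is a finite set of clauses with no predicate letter heading more than one clause; Inst-$\mathcal P$ is its set of ground instances. $\mathcal V(\mathcal B)$: maps from ground atoms to $\mathcal B$ with pointwise orders/operations. Valuations extend to closed formulas compositionally ($v(\beta)=\beta$, connectives pointwise, $\exists$ as $\bigvee$,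 $\forall$ as $\bigwedge$ over closed-term instances, $v(equal(s,t))=\mathcal T$ if $s=t$ else $\mathcal F$). The contrajoin $v\bigtriangleup w$ evaluates likewise but gives $A$ the value $v(A)$ and $\neg A$ the value $\neg w(A)$. $\Psi_{\mathcal P}^{\alpha}(v,w)(A)=\alpha$ if $A$ heads no member of Inst-$\mathcal P$, and $=(v\bigtriangleup w)(B)$ if $A\leftarrow B\in$ Inst-$\mathcal P$. $\Psi'^{\alpha}_{\mathcal P}(v)$ is the $\le_t$-least (resp. $\le_t$-greatest, $\le_k$-least, $\le_k$-greatest) fixpoint of $x\mapsto\Psi_{\mathcal P}^{\alpha}(x,v)$ when $\alpha=\mathcal F$ (resp. $\mathcal T,\mathcal U,\mathcal I$), obtained as the limit of the transfinite iteration from the constant valuation $\alpha$. For an anti-monotonic $f$ on a complete lattice, the extreme oscillation points are the elements $\mu,\nu$ that are the least and greatest fixpoints of $f\circ f$; they satisfy $f(\mu)=\nu$, $f(\nu)=\mu$, and any $x,y$ with $f(x)=y$, $f(y)=x$ lie between $\mu$ and $\nu$. Here the lattice is $(\mathcal V(\mathcal B),\le_t)$, and $Fix^{\alpha}_{\mathcal F}$, $Fix^{\alpha}_{\mathcal T}$ denote respectively the $\le_t$-least and $\le_t$-greatest fixpoint of $\Psi'^{\alpha}_{\mathcal P}\circ\Psi'^{\alpha}_{\mathcal P}$. *)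

(* Defs.v *)
From Stdlib Require Import List Arith Bool ClassicalEpsilon.
Import ListNotations.
Set Implicit Arguments.

(* Tag selecting one of the two orders: Tr = truth order <=_t,
   Kn = knowledge order <=_k. *)
Inductive otag := Tr | Kn.

(* The raw operations of a complete bilattice with negation:
   le o     : the order <=_o,
   inf o S  : infinitary meet of the set S for <=_o
              (inf Tr = /\ (big wedge), inf Kn = (x) (big otimes)),
   sup o S  : infinitary join of S for <=_o
              (sup Tr = \/ (big vee),  sup Kn = (+) (big oplus)),
   neg      : the negation. *)
Record bl_ops := BlOps {
  car : Type;
  le  : otag -> car -> car -> Prop;
  inf : otag -> (car -> Prop) -> car;
  sup : otag -> (car -> Prop) -> car;
  neg : car -> car }.

Definition fam {X I : Type} (a : I -> X) : X -> Prop := fun z => exists i, z = a i.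

Section BLops.
Variable B : bl_ops.
(* binary meet / join: wedge = meet Tr, vee = join Tr,
   otimes = meet Kn, oplus = join Kn *)
Definition meet (o : otag) (x y : car B) : car B := inf B o (fun z => z = x \/ z = y).
Definition join (o : otag) (x y : car B) : car B := sup B o (fun z => z = x \/ z = y).
Definition bin (o : otag) (m : bool) (x y : car B) : car B :=
  if m then join o x y else meet o x y.
Definition big (o : otag) (m : bool) (S : car B -> Prop) : car B :=
  if m then sup B o S else inf B o S.
Definition botT : car B := sup B Tr (fun _ => False).
Definition topT : car B := inf B Tr (fun _ => False).
Definition botK : car B := sup B Kn (fun _ => False).
Definition topK : car B := inf B Kn (fun _ => False).
End BLops.

Record is_bilattice (B : bl_ops) : Prop := {
  le_refl    : forall o x, le B o x x;
  le_trans   : forall o x y z, le B o x y -> le B o y z -> le B o x z;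
  le_antisym : forall o x y, le B o x y -> le B o y x -> x = y;
  inf_lb  : forall o S x, S x -> le B o (inf B o S) x;
  inf_glb : forall o S y, (forall x, S x -> le B o y x) -> le B o y (inf B o S);
  sup_ub  : forall o S x, S x -> le B o x (sup B o S);
  sup_lub : forall o S y, (forall x, S x -> le B o x y) -> le B o (sup B o S) y;
  neg_invol : forall x, neg B (neg B x) = x;
  neg_leT   : forall x y, le B Tr x y -> le B Tr (neg B y) (neg B x);
  neg_leK   : forall x y, le B Kn x y -> le B Kn (neg B x) (neg B y);
  (* infinite distributivity: every binary operation distributes over every
     other infinitary operation (nonempty families) *)
  distr : forall (o1 : otag) (m1 : bool) (o2 : otag) (m2 : bool),
      (o1, m1) <> (o2, m2) ->
      forall (I : Type) (a : I -> car B) (x : car B), inhabited I ->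
      bin B o1 m1 x (big B o2 m2 (fam a))
      = big B o2 m2 (fam (fun i => bin B o1 m1 x (a i)));
  (* infinitary interlacing: all infinitary operations are monotone
     with respect to both orders *)
  interlace : forall (o : otag) (m : bool) (o' : otag) (I : Type) (a b : I -> car B),
      (forall i, le B o' (a i) (b i)) ->
      le B o' (big B o m (fam a)) (big B o m (fam b)) }.

Section Fitting.
Variables (Fn Pr : Type) (arF : Fn -> nat) (arP : Pr -> nat).

Inductive term : Type :=
| Var (n : nat)
| App (f : Fn) (l : list term).

Fixpoint twf (t : term) : bool :=
  match t with
  | Var _ => true
  | App f l => Nat.eqb (length l) (arF f) && forallb twf l
  end.

Fixpoint cwf (t : term) : bool :=
  match t with
  | Var _ => false
  | App f l => Nat.eqb (length l) (arF f) && forallb cwf l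
  end.

Fixpoint occurs (x : nat) (t : term) : bool :=
  match t with
  | Var n => Nat.eqb n x
  | App _ l => existsb (occurs x) l
  end.

Fixpoint tsubst (s : nat -> term) (t : term) : term :=
  match t with
  | Var n => s n
  | App f l => App f (map (tsubst s) l)
  end.

(* Formulas, with constants from C (the bilattice elements).
   FPos p ts = the atom p(ts), FNeg p ts = its negation; FEq/FNeq are the
   built-in predicate equal(s,t) and its negation. *)
Inductive formula (C : Type) : Type :=
| FPos (p : Pr) (ts : list term)
| FNeg (p : Pr) (ts : list term)
| FConst (c : C)
| FEq (s t : term)
| FNeq (s t : term)
| FAnd (a b : formula C)
| FOr (a b : formula C)
| FOtimes (a b : formula C)
| FOplus (a b : formula C)
| FEx (x : nat) (a : formula C)
| FAll (x : nat) (a : formula C).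
Arguments FPos {C}. Arguments FNeg {C}. Arguments FConst {C}. Arguments FEq {C}.
Arguments FNeq {C}. Arguments FAnd {C}. Arguments FOr {C}. Arguments FOtimes {C}.
Arguments FOplus {C}. Arguments FEx {C}. Arguments FAll {C}.

Fixpoint fwf {C} (φ : formula C) : bool :=
  match φ with
  | FPos p ts | FNeg p ts => Nat.eqb (length ts) (arP p) && forallb twf ts
  | FConst _ => true
  | FEq s t | FNeq s t => twf s && twf t
  | FAnd a b | FOr a b | FOtimes a b | FOplus a b => fwf a && fwf b
  | FEx x a | FAll x a => fwf a
  end.

Fixpoint free_in {C} (x : nat) (φ : formula C) : bool :=
  match φ with
  | FPos _ ts | FNeg _ ts => existsb (occurs x) ts
  | FConst _ => false
  | FEq s t | FNeq s t => occurs x s || occurs x t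
  | FAnd a b | FOr a b | FOtimes a b | FOplus a b => free_in x a || free_in x b
  | FEx y a | FAll y a => negb (Nat.eqb y x) && free_in x a
  end.

Record gatom := GAtom {
  gpred : Pr;
  gargs : list term;
  gatom_wf : Nat.eqb (length gargs) (arP gpred) && forallb cwf gargs = true }.

(* Since no predicate letter heads more than one clause,
   a program is given by a partial map from predicate letters P to the body
   φ of the (unique) clause  P(x_0,...,x_{n-1}) <- φ  (n = arity of P;
   the head variables are, w.l.o.g., the variables 0,...,n-1). *)
Record program (C : Type) := Program {
  clause : Pr -> option (formula C);
  prog_finite : exists l : list Pr, forall p, clause p <> None -> In p l;
  prog_wf : forall p φ, clause p = Some φ -> fwf φ = true;
  prog_closed : forall p φ x, clause p = Some φ -> free_in x φ = true -> x < arP p }.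

Variable B : bl_ops.

Definition valuation := gatom -> car B.

Definition leV (o : otag) (v w : valuation) : Prop := forall A, le B o (v A) (w A).
Definition infV (o : otag) (S : valuation -> Prop) : valuation :=
  fun A => inf B o (fun z => exists v, S v /\ z = v A).
Definition supV (o : otag) (S : valuation -> Prop) : valuation :=
  fun A => sup B o (fun z => exists v, S v /\ z = v A).

Definition atomval (v : valuation) (p : Pr) (ts : list term) : car B :=
  match Nat.eqb (length ts) (arP p) && forallb cwf ts as b
        return (Nat.eqb (length ts) (arP p) && forallb cwf ts = b -> car B) with
  | true => fun h => v (GAtom p ts h)
  | false => fun _ => botT B   (* never used for well-formed closed formulas *)
  end eq_refl.

Definition eqval (s t : term) : car B :=
  if excluded_middle_informative (s = t) then topT B else botT B.

Definition upd (σ : nat -> term) (x : nat) (t : term) : nat -> term :=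
  fun n => if Nat.eqb n x then t else σ n.

(* (v contrajoin w)(φ σ): the value of the closed formula obtained from φ by
   substituting the closed terms σ(x) for its free variables x
   (substitution is carried along and performed at the atoms). *)
Fixpoint ceval (v w : valuation) (σ : nat -> term) (φ : formula (car B)) : car B :=
  match φ with
  | FPos p ts => atomval v p (map (tsubst σ) ts)
  | FNeg p ts => neg B (atomval w p (map (tsubst σ) ts))
  | FConst c => c
  | FEq s t => eqval (tsubst σ s) (tsubst σ t)
  | FNeq s t => neg B (eqval (tsubst σ s) (tsubst σ t))
  | FAnd a b => meet B Tr (ceval v w σ a) (ceval v w σ b)
  | FOr a b => join B Tr (ceval v w σ a) (ceval v w σ b)
  | FOtimes a b => meet B Kn (ceval v w σ a) (ceval v w σ b)
  | FOplus a b => join B Kn (ceval v w σ a) (ceval v w σ b)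
  | FEx x a => sup B Tr (fun z => exists t, cwf t = true /\ z = ceval v w (upd σ x t) a)
  | FAll x a => inf B Tr (fun z => exists t, cwf t = true /\ z = ceval v w (upd σ x t) a)
  end.

(* the substitution x_i := t_i producing the ground instance with head A *)
Definition inst_env (A : gatom) : nat -> term := fun i => nth i (gargs A) (Var i).

Definition Psi (α : car B) (P : program (car B)) (v w : valuation) : valuation :=
  fun A => match clause P (gpred A) with
           | Some φ => ceval v w (inst_env A) φ
           | None => α
           end.

Inductive corner := cF | cT | cU | cI.
Definition cval (a : corner) : car B :=
  match a with cF => botT B | cT => topT B | cU => botK B | cI => topK B end.

Definition lfpV (o : otag) (f : valuation -> valuation) : valuation :=
  infV o (fun x => leV o (f x) x).
Definition gfpV (o : otag) (f : valuation -> valuation) : valuation :=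
  supV o (fun x => leV o x (f x)).

Definition Psi' (a : corner) (P : program (car B)) (v : valuation) : valuation :=
  let f := fun x => Psi (cval a) P x v in
  match a with
  | cF => lfpV Tr f
  | cT => gfpV Tr f
  | cU => lfpV Kn f
  | cI => gfpV Kn f
  end.

End Fitting.

Definition antimonotone {X : Type} (le : X -> X -> Prop) (f : X -> X) : Prop :=
  forall x y, le x y -> le (f y) (f x).

Definition extreme_oscillation_points {X : Type} (le : X -> X -> Prop)
    (f : X -> X) (mu nu : X) : Prop :=
  (f (f mu) = mu /\ forall x, f (f x) = x -> le mu x) /\
  (f (f nu) = nu /\ forall x, f (f x) = x -> le x nu) /\
  f mu = nu /\ f nu = mu /\
  (forall x y, f x = y -> f y = x -> le mu x /\ le x nu /\ le mu y /\ le y nu).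

(* Main.v *)
Require Import Defs.
From Stdlib Require Import FunctionalExtensionality Bool List Arith.
Set Implicit Arguments.
Lemma pair_lfp (X : Type) (le : X -> X -> Prop) (R : X -> X -> Prop)
 (supF : forall I : Type, (I -> X) -> X)
 (le_tr : forall x y z, le x y -> le y z -> le x z)
 (anti : forall x y, le x y -> le y x -> x = y)
 (ub : forall I a i, le (a i) (supF I a))
 (lub : forall I a y, (forall i, le (a i) y) -> le (supF I a) y)
 (Rsup : forall I a b, (forall i, R (a i) (b i)) -> R (supF I a) (supF I b))
 (g g' : X -> X) (gm : forall x y, le x y -> le (g x) (g y))
 (g'm : forall x y, le x y -> le (g' x) (g' y))
 (Rg : forall x y, R x y -> R (g' x) (g y))
 (L L' : X) (HL : le (g L) L) (HLl : forall x, le (g x) x -> le L x)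
 (HL' : le (g' L') L') (HL'l : forall x, le (g' x) x -> le L' x) : R L' L.
Proof.
  set (D := fun pq : X * X => R (fst pq) (snd pq) /\ le (fst pq) (g' (fst pq)) /\
     le (snd pq) (g (snd pq)) /\ le (fst pq) L' /\ le (snd pq) L).
  set (s1 := supF {pq | D pq} (fun i => fst (proj1_sig i))).
  set (s2 := supF {pq | D pq} (fun i => snd (proj1_sig i))).
  assert (R1 : R s1 s2) by (apply Rsup; intros [pq Hpq]; apply Hpq).
  assert (A1 : le s1 (g' s1)).
  { apply lub; intros [pq Hpq]; simpl. eapply le_tr; [apply (proj1 (proj2 Hpq))|]. apply g'm.
    exact (ub _ (fun i : {pq | D pq} => fst (proj1_sig i)) (exist _ pq Hpq)). }
  assert (A2 : le s2 (g s2)).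
  { apply lub; intros [pq Hpq]; simpl. eapply le_tr; [apply (proj1 (proj2 (proj2 Hpq)))|]. apply gm.
    exact (ub _ (fun i : {pq | D pq} => snd (proj1_sig i)) (exist _ pq Hpq)). }
  assert (B1 : le s1 L') by (apply lub; intros [pq Hpq]; apply (proj1 (proj2 (proj2 (proj2 Hpq))))).
  assert (B2 : le s2 L) by (apply lub; intros [pq Hpq]; apply (proj2 (proj2 (proj2 (proj2 Hpq))))).
  assert (HD : D (g' s1, g s2)).
  { unfold D; simpl; repeat split; auto.
    eapply le_tr; [apply g'm, B1| exact HL'].
    eapply le_tr; [apply gm, B2| exact HL]. }
  assert (C1 : le (g' s1) s1) by
    exact (ub _ (fun i : {pq | D pq} => fst (proj1_sig i)) (exist _ _ HD)).
  assert (C2 : le (g s2) s2) by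
    exact (ub _ (fun i : {pq | D pq} => snd (proj1_sig i)) (exist _ _ HD)).
  assert (E1 : s1 = L') by (apply anti; auto).
  assert (E2 : s2 = L) by (apply anti; auto).
  rewrite <- E1, <- E2; exact R1.
Qed.

Section S.
Variables (Fn Pr : Type) (arF : Fn -> nat) (arP : Pr -> nat) (B : bl_ops) (HB : is_bilattice B).
Unset Implicit Arguments.
Lemma match_aux o (X : bool) (F F' : X = true -> car B) (d : car B)
  (H : forall h, le B o (F h) (F' h)) : forall b (e : X = b),
  le B o (match b as b0 return X = b0 -> car B with true => fun h => F h | false => fun _ => d end e)
         (match b as b0 return X = b0 -> car B with true => fun h => F' h | false => fun _ => d end e).
Proof. intros b; destruct b; intros e. apply H. apply (le_refl HB). Qed.
Lemma atomval_mono o (v v' : valuation arF arP B) p ts :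
  leV o v v' -> le B o (atomval v p ts) (atomval v' p ts).
Proof.
  intros H. unfold atomval.
  exact (match_aux o _ (fun h => v (@GAtom Fn Pr arF arP p ts h)) (fun h => v' (@GAtom Fn Pr arF arP p ts h)) _ (fun h => H _) _ eq_refl).
Qed.
Set Implicit Arguments.
Lemma big_ext o m (S S' : car B -> Prop) : (forall z, S z <-> S' z) -> big B o m S = big B o m S'.
Proof.
  intros H; destruct m; simpl; apply (le_antisym HB o).
  - apply (sup_lub HB); intros x Hx; apply (sup_ub HB), H, Hx.
  - apply (sup_lub HB); intros x Hx; apply (sup_ub HB), H, Hx.
  - apply (inf_glb HB); intros x Hx; apply (inf_lb HB), H, Hx.
  - apply (inf_glb HB); intros x Hx; apply (inf_lb HB), H, Hx.
Qed.
Lemma big_mono o m o' I (a b : I -> car B) (S1 S2 : car B -> Prop) :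
  (forall z, S1 z <-> fam a z) -> (forall z, S2 z <-> fam b z) ->
  (forall i, le B o' (a i) (b i)) -> le B o' (big B o m S1) (big B o m S2).
Proof.
  intros H1 H2 H. rewrite (big_ext o m _ _ H1), (big_ext o m _ _ H2).
  apply (interlace HB); exact H.
Qed.

Lemma bin_mono o m o' x y x' y' : le B o' x x' -> le B o' y y' ->
  le B o' (big B o m (fun z => z = x \/ z = y)) (big B o m (fun z => z = x' \/ z = y')).
Proof.
  intros Hx Hy.
  apply (@big_mono o m o' bool (fun c => if c then x else y) (fun c => if c then x' else y')).
  - intros z; split. intros [->| ->]. exists true; auto. exists false; auto.
    intros [[|] ->]; auto.
  - intros z; split. intros [->| ->]. exists true; auto. exists false; auto.
    intros [[|] ->]; auto.
  - intros [|]; auto.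
Qed.
Lemma q_mono o m o' (F G : term Fn -> car B) :
  (forall t, cwf arF t = true -> le B o' (F t) (G t)) ->
  le B o' (big B o m (fun z => exists t, cwf arF t = true /\ z = F t))
          (big B o m (fun z => exists t, cwf arF t = true /\ z = G t)).
Proof.
  intros H.
  apply (@big_mono o m o' {t | cwf arF t = true} (fun i => F (proj1_sig i)) (fun i => G (proj1_sig i))).
  - intros z; split. intros [t [Ht ->]]. exists (exist _ t Ht); auto.
    intros [[t Ht] ->]. exists t; auto.
  - intros z; split. intros [t [Ht ->]]. exists (exist _ t Ht); auto.
    intros [[t Ht] ->]. exists t; auto.
  - intros [t Ht]; apply H, Ht.
Qed.
Definition relw (o : otag) (w w' : valuation arF arP B) : Prop :=
  match o with Tr => leV Tr w' w | Kn => leV Kn w w' end.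
Lemma ceval_mono o (v v' w w' : valuation arF arP B) :
  leV o v v' -> relw o w w' -> forall φ σ, le B o (ceval v w σ φ) (ceval v' w' σ φ).
Proof.
  intros Hv Hw φ; induction φ; intros σ; simpl.
  - apply atomval_mono; auto.
  - destruct o; simpl in Hw.
    + apply (neg_leT HB). apply atomval_mono; auto.
    + apply (neg_leK HB). apply atomval_mono; auto.
  - apply (le_refl HB).
  - apply (le_refl HB).
  - apply (le_refl HB).
  - exact (bin_mono Tr false o _ _ _ _ (IHφ1 σ) (IHφ2 σ)).
  - exact (bin_mono Tr true o _ _ _ _ (IHφ1 σ) (IHφ2 σ)).
  - exact (bin_mono Kn false o _ _ _ _ (IHφ1 σ) (IHφ2 σ)).
  - exact (bin_mono Kn true o _ _ _ _ (IHφ1 σ) (IHφ2 σ)).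
  - exact (q_mono Tr true o _ _ (fun t _ => IHφ _)).
  - exact (q_mono Tr false o _ _ (fun t _ => IHφ _)).
Qed.
Lemma Psi_mono o α P (v v' w w' : valuation arF arP B) :
  leV o v v' -> relw o w w' -> leV o (Psi α P v w) (Psi α P v' w').
Proof.
  intros Hv Hw A; unfold Psi. destruct (clause P (gpred A)).
  apply ceval_mono; auto. apply (le_refl HB).
Qed.
Notation V := (valuation arF arP B).
Lemma leV_refl o (v : V) : leV o v v.
Proof. intros A; apply (le_refl HB). Qed.
Lemma leV_trans o (u v w : V) : leV o u v -> leV o v w -> leV o u w.
Proof. intros H1 H2 A; eapply (le_trans HB); eauto. Qed.
Lemma leV_antisym o (u v : V) : leV o u v -> leV o v u -> u = v.
Proof. intros H1 H2; apply functional_extensionality; intros A; apply (le_antisym HB o); auto. Qed.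
Lemma infV_lb o (S : V -> Prop) v : S v -> leV o (infV o S) v.
Proof. intros H A; apply (inf_lb HB); exists v; auto. Qed.
Lemma infV_glb o (S : V -> Prop) y : (forall v, S v -> leV o y v) -> leV o y (infV o S).
Proof. intros H A; apply (inf_glb HB); intros z [v [Hv ->]]; apply H; auto. Qed.
Lemma supV_ub o (S : V -> Prop) v : S v -> leV o v (supV o S).
Proof. intros H A; apply (sup_ub HB); exists v; auto. Qed.
Lemma supV_lub o (S : V -> Prop) y : (forall v, S v -> leV o v y) -> leV o (supV o S) y.
Proof. intros H A; apply (sup_lub HB); intros z [v [Hv ->]]; apply H; auto. Qed.
Definition monoV o (h : V -> V) := forall x y : V, leV o x y -> leV o (h x) (h y).
Lemma lfp_pre o (h : V -> V) : monoV o h -> leV o (h (lfpV o h)) (lfpV o h).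
Proof.
  intros Hm. apply infV_glb. intros x Hx. eapply leV_trans; [|exact Hx].
  apply Hm, infV_lb, Hx.
Qed.
Lemma lfp_least o (h : V -> V) (x : V) : leV o (h x) x -> leV o (lfpV o h) x.
Proof. intros H; apply infV_lb; exact H. Qed.
Lemma lfp_fix o (h : V -> V) : monoV o h -> h (lfpV o h) = lfpV o h.
Proof.
  intros Hm. apply leV_antisym with o. apply lfp_pre; auto.
  apply lfp_least. apply Hm, lfp_pre; auto.
Qed.
Lemma gfp_post o (h : V -> V) : monoV o h -> leV o (gfpV o h) (h (gfpV o h)).
Proof.
  intros Hm. apply supV_lub. intros x Hx. eapply leV_trans; [exact Hx|].
  apply Hm, supV_ub, Hx.
Qed.
Lemma gfp_greatest o (h : V -> V) (x : V) : leV o x (h x) -> leV o x (gfpV o h).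
Proof. intros H; apply supV_ub; exact H. Qed.
Lemma gfp_fix o (h : V -> V) : monoV o h -> h (gfpV o h) = gfpV o h.
Proof.
  intros Hm. apply leV_antisym with o.
  apply gfp_greatest. apply Hm, gfp_post; auto. apply gfp_post; auto.
Qed.



Lemma anti_Psi' (P : program arF arP (car B)) (a : corner) :
  antimonotone (@leV Fn Pr arF arP B Tr) (@Psi' Fn Pr arF arP B a P).
Proof.
  intros x y Hxy.
  assert (Hm : forall o z, monoV o (fun u => Psi (cval B a) P u z)).
  { intros o z u u' Hu. apply Psi_mono; auto. destruct o; simpl; apply leV_refl. }
  assert (Hc : forall u, leV Tr (Psi (cval B a) P u y) (Psi (cval B a) P u x)).
  { intros u. apply Psi_mono; simpl; auto. apply leV_refl. }
  assert (Rg : forall p q, leV Tr p q -> leV Tr (Psi (cval B a) P p y) (Psi (cval B a) P q x)).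
  { intros p q Hpq. eapply leV_trans; [|apply Hc]. apply (Hm Tr y _ _ Hpq). }
  destruct a; unfold Psi'.
  - apply lfp_least. eapply leV_trans; [apply Hc|]. exact (lfp_pre (Hm Tr x)).
  - apply gfp_greatest. eapply leV_trans; [|apply Hc]. exact (gfp_post (Hm Tr y)).
  - assert (T1 : forall u v w : V, leV Kn u v -> leV Kn v w -> leV Kn u w) by apply leV_trans.
    assert (T2 : forall u v : V, leV Kn u v -> leV Kn v u -> u = v) by apply leV_antisym.
    set (sF := fun I (a : I -> V) A => sup B Kn (fam (fun i => a i A))).
    assert (T3 : forall I (a : I -> V) i, leV Kn (a i) (sF I a)).
    { intros I a0 i A. apply (sup_ub HB). exists i; auto. }
    assert (T4 : forall I (a : I -> V) u, (forall i, leV Kn (a i) u) -> leV Kn (sF I a) u).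
    { intros I a0 u H A. apply (sup_lub HB). intros z [i ->]. apply H. }
    assert (T5 : forall I (a b : I -> V), (forall i, leV Tr (a i) (b i)) -> leV Tr (sF I a) (sF I b)).
    { intros I a0 b H A. exact (interlace HB Kn true Tr (fun i => a0 i A) (fun i => b i A) (fun i => H i A)). }
    apply (@pair_lfp V (leV Kn) (leV Tr) sF T1 T2 T3 T4 T5
       (fun u => Psi (cval B cU) P u x) (fun u => Psi (cval B cU) P u y)
       (Hm Kn x) (Hm Kn y) Rg _ _ (lfp_pre (Hm Kn x)) (fun z H => lfp_least _ H)
       (lfp_pre (Hm Kn y)) (fun z H => lfp_least _ H)).
  - assert (T1 : forall u v w : V, leV Kn v u -> leV Kn w v -> leV Kn w u).
    { intros u v w H1 H2. eapply leV_trans; eauto. }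
    assert (T2 : forall u v : V, leV Kn v u -> leV Kn u v -> u = v).
    { intros u v H1 H2. apply leV_antisym with Kn; auto. }
    set (sF := fun I (a : I -> V) A => inf B Kn (fam (fun i => a i A))).
    assert (T3 : forall I (a : I -> V) i, leV Kn (sF I a) (a i)).
    { intros I a0 i A. apply (inf_lb HB). exists i; auto. }
    assert (T4 : forall I (a : I -> V) u, (forall i, leV Kn u (a i)) -> leV Kn u (sF I a)).
    { intros I a0 u H A. apply (inf_glb HB). intros z [i ->]. apply H. }
    assert (T5 : forall I (a b : I -> V), (forall i, leV Tr (a i) (b i)) -> leV Tr (sF I a) (sF I b)).
    { intros I a0 b H A. exact (interlace HB Kn false Tr (fun i => a0 i A) (fun i => b i A) (fun i => H i A)). }
    apply (@pair_lfp V (fun u v => leV Kn v u) (leV Tr) sF T1 T2 T3 T4 T5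
       (fun u => Psi (cval B cI) P u x) (fun u => Psi (cval B cI) P u y)
       (fun u v H => Hm Kn x v u H) (fun u v H => Hm Kn y v u H) Rg _ _
       (gfp_post (Hm Kn x)) (fun z H => gfp_greatest _ H)
       (gfp_post (Hm Kn y)) (fun z H => gfp_greatest _ H)).
Qed.

Lemma main (P : program arF arP (car B)) (a : corner) :
  antimonotone (@leV Fn Pr arF arP B Tr) (@Psi' Fn Pr arF arP B a P) /\
  exists FixF FixT : valuation arF arP B,
    extreme_oscillation_points (@leV Fn Pr arF arP B Tr) (@Psi' Fn Pr arF arP B a P)
      FixF FixT /\
    @leV Fn Pr arF arP B Tr FixF FixT.
Proof.
  pose proof (anti_Psi' P a) as Ha. split; [exact Ha|].
  set (f := Psi' a P) in *.
  assert (Hff : monoV Tr (fun v => f (f v))) by (intros u v H; apply Ha, Ha, H).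
  set (mu := lfpV Tr (fun v => f (f v))).
  set (nu := gfpV Tr (fun v => f (f v))).
  assert (Fm : f (f mu) = mu) by exact (lfp_fix Hff).
  assert (Fn' : f (f nu) = nu) by exact (gfp_fix Hff).
  assert (Lm : forall x, f (f x) = x -> leV Tr mu x).
  { intros x Hx. apply (lfp_least (fun v => f (f v))). rewrite Hx. apply leV_refl. }
  assert (Gn : forall x, f (f x) = x -> leV Tr x nu).
  { intros x Hx. apply (gfp_greatest (fun v => f (f v))). rewrite Hx. apply leV_refl. }
  assert (E1 : f mu = nu).
  { apply leV_antisym with Tr.
    - apply Gn. rewrite Fm; reflexivity.
    - rewrite <- Fn' at 1. apply Ha. apply Lm. rewrite Fn'; reflexivity. }
  assert (E2 : f nu = mu) by (rewrite <- E1; exact Fm).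
  assert (Hmn : leV Tr mu nu) by (apply Lm; exact Fn').
  exists mu, nu. split; [|exact Hmn].
  split; [split; auto|]. split; [split; auto|]. split; [exact E1|]. split; [exact E2|].
  intros x y Hx Hy.
  assert (X1 : f (f x) = x) by (rewrite Hx; exact Hy).
  assert (Y1 : f (f y) = y) by (rewrite Hy; exact Hx).
  repeat split; auto.
Qed.
End S.

Theorem proposition2 (Fn Pr : Type) (arF : Fn -> nat) (arP : Pr -> nat)
    (B : bl_ops) (HB : is_bilattice B)
    (P : program arF arP (car B)) (a : corner) :
  antimonotone (@leV Fn Pr arF arP B Tr) (@Psi' Fn Pr arF arP B a P) /\
  exists FixF FixT : valuation arF arP B,
    extreme_oscillation_points (@leV Fn Pr arF arP B Tr) (@Psi' Fn Pr arF arP B a P)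
      FixF FixT /\
    @leV Fn Pr arF arP B Tr FixF FixT.
Proof.
  exact (main HB P a).
Qed.
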